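(* Assume the setting in the context. Then the iterates of A-SubSGDP satisfy, for all $t$, $$\mathbb{E}\big[\|w^t-w_*\|^2\big]\le\frac{4\eta^2M}{\mu^2(t+\eta)} .$$
   Context: Setting: $\mathcal Y$ finite; $\mathcal W\subseteq\mathbb{R}^D$ convex; $f_i:\mathcal Y\times\mathbb{R}^D\to\mathbb{R}$ ($i=1,\dots,n$) each convex in $w$, $r$ strongly convex, and each $g_i(w)=r(w)+\max_{y\in\mathcal Y}f_i(y,w)$ is $\mu$-strongly convex; subgradients of $r(w)+f_i(y,w)$ exist and $\sup\{\|v\|^2: v\in\partial[r(w)+f_i(y,w)],\ i,\ y\in\mathcal Y,\ w\in\mathcal W\}\le M$; there is $w_0\in\mathcal W$ with $g_i(w_0)=0$ for all $i$; each $f_i$ has a quantum oracle acting on $O(\mathrm{polylog}(1/\delta,|\mathcal Y|))$ qubits computing $f_i$ with additive error $\delta$. $f=\frac1n\sum_i g_i$ and $w_*=\arg\min_{w\in\mathcal W}f(w)$. Given $\eta\in\mathbb{N}^+$, set $\gamma_t=\frac{\eta}{\mu(t+\eta)}$ and $p_t=\frac1{4\sqrt{t+\eta}}$. A-SubSGDP: given $w^0\in\mathcal W$, an iteration count $T$ and $\eta$, at iteration $t$ choose an index $i$ uniformly at random from $\{1,\dots,n\}$ and compute an estimate $\hat y_i^t$ of a maximizer $\tilde y_i^t\in\arg\max_{y}f_i(y,w^t)$ that is correct with probability at least $1-p_t$; let $\widehat{\partial g_i(w^t)}$ be a subgradient of $w\mapsto r(w)+f_i(\hat y_i^t,w)$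 at $w^t$; set $w^{t+1}=\Pi_{\mathcal W}(w^t-\gamma_t\widehat{\partial g_i(w^t)})$ ($\Pi_{\mathcal W}$ Euclidean projection) and $\bar w_\eta^{t+1}=\frac{t}{t+\eta+1}\bar w_\eta^t+\frac{\eta+1}{t+\eta+1}w^{t+1}$; output $\bar w_\eta^T$. *)

(* Defs.v *)
From HB Require Import structures.
From mathcomp Require Import all_boot all_order all_algebra.
From mathcomp Require Import reals.
Set Implicit Arguments. Unset Strict Implicit. Unset Printing Implicit Defensive.
Import Order.TTheory GRing.Theory Num.Theory.
Local Open Scope ring_scope.

Section Defs.
Variables (R : realType) (D : nat).
Notation vec := 'rV[R]_D.

Definition dotv (u v : vec) : R := \sum_(j < D) u 0 j * v 0 j.
Definition sqnorm (u : vec) : R := dotv u u.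

Definition convex_set (W : vec -> Prop) : Prop :=
  forall x y (l : R), W x -> W y -> 0 <= l <= 1 -> W (l *: x + (1 - l) *: y).

Definition convex_fun (h : vec -> R) : Prop :=
  forall x y (l : R), 0 <= l <= 1 ->
    h (l *: x + (1 - l) *: y) <= l * h x + (1 - l) * h y.

Definition strongly_convex (mu : R) (h : vec -> R) : Prop :=
  forall x y (l : R), 0 <= l <= 1 ->
    h (l *: x + (1 - l) *: y) <=
      l * h x + (1 - l) * h y - mu / 2 * l * (1 - l) * sqnorm (x - y).

Definition is_subgrad (h : vec -> R) (w v : vec) : Prop :=
  forall z, h w + dotv v (z - w) <= h z.

Definition is_proj (W : vec -> Prop) (p : vec -> vec) : Prop :=
  forall x, W (p x) /\ forall z, W z -> sqnorm (x - p x) <= sqnorm (x - z).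

Definition fmax (Y : finType) (F : Y -> R) : R :=
  if [pick y : Y] is Some y0 then \big[Num.max/F y0]_(y : Y) F y else 0.

Definition gam (mu : R) (eta t : nat) : R := eta%:R / (mu * (t + eta)%:R).
Definition pfail (eta t : nat) : R := 1 / (4 * Num.sqrt (t + eta)%:R).

(* A history is a sequence of choices (i_s, yhat_s), NEWEST FIRST.
   sg h i y w is the subgradient of w |-> r w + f_i(y, w) used at w, given the
   past history h and the current choices i, y. *)
Fixpoint iterw (n : nat) (Y : finType) (proj : vec -> vec) (mu : R) (eta : nat)
   (sg : seq ('I_n * Y) -> 'I_n -> Y -> vec -> vec) (w0 : vec)
   (h : seq ('I_n * Y)) : vec :=
  match h with
  | [::] => w0
  | c :: h' =>
      let w := iterw proj mu eta sg w0 h' in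
      proj (w - gam mu eta (size h') *: sg h' c.1 c.2 w)
  end.

(* probability of a history: i uniform on 'I_n, then yhat drawn from the
   (history-dependent) distribution q h i of the maximizer estimator *)
Fixpoint histprob (n : nat) (Y : finType) (q : seq ('I_n * Y) -> 'I_n -> Y -> R)
   (h : seq ('I_n * Y)) : R :=
  match h with
  | [::] => 1
  | c :: h' => histprob q h' * (n%:R)^-1 * q h' c.1 c.2
  end.

End Defs.

(* Main.v *)
Require Import Defs.
From HB Require Import structures.
From mathcomp Require Import all_boot all_order all_algebra.
From mathcomp Require Import reals.
From mathcomp Require Import ring lra.
Import Order.TTheory GRing.Theory Num.Theory.
Local Open Scope ring_scope.
Set Implicit Arguments. Unset Strict Implicit.

Section Vec.
Variables (R : realType) (D : nat).
Notation vec := 'rV[R]_D.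
Implicit Types u v z : vec.

Lemma dotvC u v : dotv u v = dotv v u.
Proof. by apply: eq_bigr => j _; rewrite mulrC. Qed.
Lemma dotvDl u v z : dotv (u + v) z = dotv u z + dotv v z.
Proof. by rewrite /dotv -big_split; apply: eq_bigr => j _; rewrite mxE mulrDl. Qed.
Lemma dotvZl (a : R) u z : dotv (a *: u) z = a * dotv u z.
Proof. by rewrite /dotv mulr_sumr; apply: eq_bigr => j _; rewrite mxE mulrA. Qed.
Lemma dotvNl u z : dotv (- u) z = - dotv u z.
Proof. by rewrite /dotv -sumrN; apply: eq_bigr => j _; rewrite mxE mulNr. Qed.
Lemma dotvBl u v z : dotv (u - v) z = dotv u z - dotv v z.
Proof. by rewrite dotvDl dotvNl. Qed.
Lemma dotvDr u v z : dotv z (u + v) = dotv z u + dotv z v.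
Proof. by rewrite dotvC dotvDl !(dotvC z). Qed.
Lemma dotvZr (a : R) u z : dotv z (a *: u) = a * dotv z u.
Proof. by rewrite dotvC dotvZl dotvC. Qed.
Lemma dotvNr u z : dotv z (- u) = - dotv z u.
Proof. by rewrite dotvC dotvNl dotvC. Qed.
Lemma dotvBr u v z : dotv z (u - v) = dotv z u - dotv z v.
Proof. by rewrite dotvDr dotvNr. Qed.
Lemma sqnorm_ge0 u : 0 <= sqnorm u.
Proof. by apply: sumr_ge0 => j _; rewrite -expr2 sqr_ge0. Qed.
Lemma sqnormD u v : sqnorm (u + v) = sqnorm u + 2 * dotv u v + sqnorm v.
Proof. rewrite /sqnorm dotvDl !dotvDr (dotvC v u); ring. Qed.
Lemma sqnormN u : sqnorm (- u) = sqnorm u.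
Proof. by rewrite /sqnorm dotvNl dotvNr opprK. Qed.
Lemma sqnormB u v : sqnorm (u - v) = sqnorm u - 2 * dotv u v + sqnorm v.
Proof. rewrite sqnormD sqnormN dotvNr; ring. Qed.
Lemma sqnormZ (a : R) u : sqnorm (a *: u) = a ^+ 2 * sqnorm u.
Proof. rewrite /sqnorm dotvZl dotvZr; ring. Qed.

Lemma young u v (b : R) : 0 < b -> 2 * dotv u v <= b * sqnorm u + sqnorm v / b.
Proof.
move=> b0; have := sqnorm_ge0 (b *: u - v).
rewrite sqnormB sqnormZ dotvZl => h.
have hb : b * (b * sqnorm u + sqnorm v / b - 2 * dotv u v) = b ^+ 2 * sqnorm u - 2 * (b * dotv u v) + sqnorm v.
  by field; rewrite gt_eqF.
have : 0 <= b * (b * sqnorm u + sqnorm v / b - 2 * dotv u v) by rewrite hb.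
rewrite pmulr_rge0 // subr_ge0 //.
Qed.

Lemma sqnormB_le u v : sqnorm (u - v) <= 2 * sqnorm u + 2 * sqnorm v.
Proof.
have := sqnorm_ge0 (u + v); rewrite sqnormD sqnormB; lra.
Qed.

Lemma lim_le (a b c : R) : (forall l, 0 < l -> l <= 1 -> a <= b + l * c) -> a <= b.
Proof.
move=> H; case: (lerP c 0) => hc.
  have := H 1 ltr01 (lexx _); rewrite mul1r; lra.
rewrite leNgt; apply/negP => hab.
pose l := Num.min 1 ((a - b) / (2 * c)).
have l0 : 0 < l by rewrite lt_min ltr01 /= divr_gt0 // ?subr_gt0 // mulr_gt0.
have l1 : l <= 1 by rewrite ge_min lexx.
have l2 : l * c <= (a - b) / 2.
  have : l <= (a - b) / (2 * c) by rewrite ge_min lexx orbT.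
  move=> hl; have := ler_wpM2r (ltW hc) hl.
  have -> : (a - b) / (2 * c) * c = (a - b) / 2 by field; rewrite gt_eqF.
  done.
have := H l l0 l1; lra.
Qed.

End Vec.


Section Cvx.
Variables (R : realType) (D : nat).
Notation vec := 'rV[R]_D.
Implicit Types u v z w : vec.

Lemma combE (l : R) z w : l *: z + (1 - l) *: w - w = l *: (z - w).
Proof. by rewrite scalerBl scale1r scalerBr addrA addrAC addrK. Qed.

Lemma sc_subgrad (mu : R) (h : vec -> R) w v :
  strongly_convex mu h -> is_subgrad h w v ->
  forall z, h w + dotv v (z - w) + mu / 2 * sqnorm (z - w) <= h z.
Proof.
move=> hsc hsg z.
apply: (@lim_le _ _ _ (mu / 2 * sqnorm (z - w))) => l l0 l1.
have h1 := hsg (l *: z + (1 - l) *: w).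
rewrite combE dotvZr in h1.
have h2 := hsc z w l; rewrite ltW //= l1 in h2; have {}h2 := h2 isT.
have : l * (h w + dotv v (z - w) + mu / 2 * sqnorm (z - w)) <=
       l * (h z + l * (mu / 2 * sqnorm (z - w))).
  set A := h (_ + _) in h1 h2.
  have e1 : l * (h w + dotv v (z - w) + mu / 2 * sqnorm (z - w)) =
     (h w + l * dotv v (z - w)) - h w + l * h w + l * (mu/2 * sqnorm (z - w)) by ring.
  have e2 : l * (h z + l * (mu / 2 * sqnorm (z - w))) =
     (l * h z + (1 - l) * h w - mu / 2 * l * (1 - l) * sqnorm (z - w)) - h w + l * h w
       + l * (mu/2 * sqnorm (z - w)) by ring.
  rewrite e1 e2; lra.
by rewrite ler_pM2l.
Qed.

Lemma proj_nonexp (W : vec -> Prop) proj x z :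
  convex_set W -> is_proj W proj -> W z ->
  sqnorm (proj x - z) <= sqnorm (x - z).
Proof.
move=> cW hp Wz; have [Wp hmin] := hp x; set p := proj x in Wp hmin *.
have key : dotv (x - p) (z - p) <= 0.
  apply: (@lim_le _ _ _ (sqnorm (z - p) / 2)) => l l0 l1.
  rewrite add0r.
  have := hmin (l *: z + (1 - l) *: p) (cW _ _ _ Wz Wp _).
  rewrite ltW //= l1 => /(_ isT).
  have -> : x - (l *: z + (1 - l) *: p) = (x - p) - l *: (z - p).
    by rewrite -combE opprB addrA subrK. 
  rewrite [sqnorm (_ - l *: _)]sqnormB sqnormZ dotvZr => h.
  have : l * (2 * dotv (x - p) (z - p)) <= l * (l * sqnorm (z - p)).
    have e : l * (l * sqnorm (z - p)) = l ^+ 2 * sqnorm (z - p) by ring.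
    rewrite e; lra.
  rewrite ler_pM2l // => h'.
  have e : l * (sqnorm (z - p) / 2) = (l * sqnorm (z - p)) / 2 by ring.
  rewrite e; lra.
rewrite -[sqnorm (p - z)]sqnormN opprB.
have -> : x - z = (x - p) - (z - p) by rewrite opprB addrA subrK.
rewrite [sqnorm (_ - (z - p))]sqnormB; have := sqnorm_ge0 (x - p); lra.
Qed.

End Cvx.


Section Fm.
Variables (R : realType) (Y : finType).

Lemma bigmax_seq_ub (F : Y -> R) x0 (s : seq Y) y :
  y \in s -> F y <= \big[Num.max/x0]_(i <- s) F i.
Proof.
elim: s => // a s IH; rewrite in_cons big_cons le_max => /orP [/eqP->|ys].
  by rewrite lexx.
by rewrite IH // orbT.
Qed.

Lemma bigmax_seq_att (F : Y -> R) y0 (s : seq Y) :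
  exists y, \big[Num.max/F y0]_(i <- s) F i = F y.
Proof.
elim: s => [|a s [y IH]]; first by exists y0; rewrite big_nil.
rewrite big_cons IH; case: (leP (F a) (F y)) => h.
  by exists y.
by exists a.
Qed.

Lemma fmax_ub (F : Y -> R) y : F y <= fmax F.
Proof.
rewrite /fmax; case: pickP => [y0 _|/(_ y)//].
by apply: bigmax_seq_ub; rewrite mem_index_enum.
Qed.

Lemma fmax_att (F : Y -> R) : (0 < #|Y|)%N -> exists y, fmax F = F y.
Proof.
move=> hY; rewrite /fmax; case: pickP => [y0 _|].
  exact: bigmax_seq_att.
by move=> h; case/card_gt0P: hY => y _; have := h y.
Qed.

Lemma fmax_arg (F : Y -> R) y : [forall y', F y' <= F y] -> fmax F = F y.
Proof.
move=> /forallP h; have [y1 e] : exists y1, fmax F = F y1.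
  by apply: fmax_att; apply/card_gt0P; exists y.
apply/eqP; rewrite eq_le fmax_ub andbT e; exact: h.
Qed.

Lemma fmax_exarg (F : Y -> R) : (0 < #|Y|)%N -> exists y, [forall y', F y' <= F y].
Proof.
move=> hY; have [y e] := fmax_att F hY; exists y; apply/forallP => y'.
by rewrite -e fmax_ub.
Qed.

End Fm.

Lemma sum_tupleS (R : realType) (T : finType) (t : nat) (G : seq T -> R) :
  \sum_(h : t.+1.-tuple T) G h = \sum_(c : T) \sum_(h : t.-tuple T) G (c :: h).
Proof.
rewrite pair_big /=.
rewrite (reindex (fun p : T * t.-tuple T => [tuple of p.1 :: p.2])) /=.
  by apply: eq_bigr.
exists (fun h : t.+1.-tuple T => (thead h, [tuple of behead h])).
  move=> [c h] _ /=; rewrite theadE; congr pair; apply: val_inj => //.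
by move=> h _; rewrite -tuple_eta.
Qed.

Lemma sum_tuple0 (R : realType) (T : finType) (G : seq T -> R) :
  \sum_(h : 0.-tuple T) G h = G [::].
Proof.
rewrite (big_pred1 [tuple]) // => h; apply/esym/eqP; apply: val_inj; by case: h => -[].
Qed.


Section Step.
Variables (R : realType) (D n : nat) (Y : finType)
  (W : 'rV[R]_D -> Prop) (f : 'I_n -> Y -> 'rV[R]_D -> R) (r : 'rV[R]_D -> R)
  (mu M : R) (wstar : 'rV[R]_D).

Hypothesis hY : (0 < #|Y|)%N.
Hypothesis subex : forall i y w, exists v, is_subgrad (fun z => r z + f i y z) w v.
Hypothesis Mb : forall i y w v, W w -> is_subgrad (fun z => r z + f i y z) w v ->
     sqnorm v <= M.

Definition gg i (z : 'rV[R]_D) := r z + fmax (fun y => f i y z).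

Lemma subg_max i y w v : [forall y', f i y' w <= f i y w] ->
  is_subgrad (fun z => r z + f i y z) w v -> is_subgrad (gg i) w v.
Proof.
move=> hm hs z; rewrite /gg (fmax_arg hm).
apply: le_trans (hs z) _; rewrite lerD2l; exact: fmax_ub.
Qed.

Lemma gsub_ex i w : W w -> exists v, is_subgrad (gg i) w v /\ sqnorm v <= M.
Proof.
move=> Ww; have [y hy] := fmax_exarg (fun y => f i y w) hY.
have [v hv] := subex i y w; exists v; split; first exact: subg_max hy hv.
exact: Mb Ww hv.
Qed.

Lemma M_ge0 (i : 'I_n) w : W w -> 0 <= M.
Proof.
move=> Ww; have [v [_ nv]] := gsub_ex i Ww; exact: le_trans (sqnorm_ge0 v) nv.
Qed.

Lemma dist_sym (u v : 'rV[R]_D) : sqnorm (u - v) = sqnorm (v - u).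
Proof. by rewrite -sqnormN opprB. Qed.

Lemma dotv_sym (a u v : 'rV[R]_D) : dotv a (u - v) = - dotv a (v - u).
Proof. by rewrite -dotvNr opprB. Qed.

Hypothesis mu0 : 0 < mu.
Hypothesis gsc : forall i, strongly_convex mu (fun w => r w + fmax (fun y => f i y w)).

Lemma apriori (i : 'I_n) w : W w -> W wstar -> sqnorm (w - wstar) <= 4 * M / mu ^+ 2.
Proof.
move=> Ww Wst.
have [v [hv nv]] := gsub_ex i Ww; have [s [hs ns]] := gsub_ex i Wst.
have h1 := sc_subgrad (gsc i) hv wstar.
have h2 := sc_subgrad (gsc i) hs w.
rewrite dist_sym dotv_sym in h1.
set d := sqnorm (w - wstar) in h1 h2 *.
have mui : 0 < mu^-1 by rewrite invr_gt0.
have hy := young (v - s) (w - wstar) mui.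
rewrite invrK dotvBl in hy.
have hvs := sqnormB_le v s.
have hm : mu^-1 * sqnorm (v - s) <= mu^-1 * (2 * M + 2 * M).
  by apply: ler_wpM2l; [rewrite invr_ge0 ltW | lra].
rewrite -/d in hy.
have hmd : mu * d <= 4 * M / mu.
  have : 2 * (mu * d) <= mu^-1 * (2 * M + 2 * M) + d * mu.
    rewrite /gg /= in h1 h2; lra.
  have -> : mu^-1 * (2 * M + 2 * M) = 4 * M / mu by field; rewrite gt_eqF.
  lra.
have -> : d = (mu * d) / mu by field; rewrite gt_eqF.
rewrite ler_pdivrMr // ; apply: le_trans hmd _.
have -> : 4 * M / mu ^+ 2 * mu = 4 * M / mu by field; rewrite gt_eqF.
done.
Qed.

End Step.


Section Step2.
Variables (R : realType) (D n : nat) (Y : finType)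
  (W : 'rV[R]_D -> Prop) (f : 'I_n -> Y -> 'rV[R]_D -> R) (r : 'rV[R]_D -> R)
  (mu M : R) (wstar : 'rV[R]_D).
Hypothesis n0 : (0 < n)%N.
Hypothesis cW : convex_set W.
Hypothesis mu0 : 0 < mu.
Hypothesis gsc : forall i, strongly_convex mu (fun w => r w + fmax (fun y => f i y w)).
Hypothesis hmin : forall w, W w ->
     (n%:R)^-1 * \sum_(i < n) (r wstar + fmax (fun y => f i y wstar))
     <= (n%:R)^-1 * \sum_(i < n) (r w + fmax (fun y => f i y w)).
Hypothesis Wst : W wstar.

Lemma Fmin w : W w ->
  n%:R * (mu / 2) * sqnorm (w - wstar) <= \sum_i gg f r i w - \sum_i gg f r i wstar.
Proof.
move=> Ww.
apply: (@lim_le _ _ _ (n%:R * (mu/2) * sqnorm (w - wstar))) => l l0 l1.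
set x := l *: w + (1 - l) *: wstar.
have Wx : W x by apply: cW => //; rewrite ltW.
have h1 := hmin Wx; rewrite ler_pM2l ?invr_gt0 ?ltr0n // in h1.
have h2 : \sum_i gg f r i x <= \sum_(i < n) (l * gg f r i w + (1 - l) * gg f r i wstar
     - mu / 2 * l * (1 - l) * sqnorm (w - wstar)).
  apply: ler_sum => i _; apply: (gsc i); by rewrite ltW.
set c := mu / 2 * l * (1 - l) * sqnorm (w - wstar) in h2.
have e : \sum_(i < n) (l * gg f r i w + (1 - l) * gg f r i wstar - c) =
   l * \sum_(i < n) gg f r i w + (1 - l) * \sum_(i < n) gg f r i wstar - c * n%:R.
  rewrite sumrB big_split /= -!mulr_sumr sumr_const card_ord -(mulr_natr (sqnorm (w - wstar)) n) /c; ring.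
rewrite e in h2; rewrite /c in h2.
have {}h1 : \sum_(i < n) gg f r i wstar <= \sum_(i < n) gg f r i x := h1.
set Sw := \sum_(i < n) gg f r i w in h2 *.
set Ss := \sum_(i < n) gg f r i wstar in h1 h2 *.
set Sx := \sum_(i < n) gg f r i x in h1 h2.
set d := sqnorm _ in h2 *.
have : l * (n%:R * (mu / 2) * d) <= l * (Sw - Ss + l * (n%:R * (mu / 2) * d)) by lra.
by rewrite ler_pM2l.
Qed.


Variables (eta : nat) (proj : 'rV[R]_D -> 'rV[R]_D)
  (q : seq ('I_n * Y) -> 'I_n -> Y -> R)
  (sg : seq ('I_n * Y) -> 'I_n -> Y -> 'rV[R]_D -> 'rV[R]_D) (winit : 'rV[R]_D).
Hypothesis hY : (0 < #|Y|)%N.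
Hypothesis subex : forall i y w, exists v, is_subgrad (fun z => r z + f i y z) w v.
Hypothesis Mb : forall i y w v, W w -> is_subgrad (fun z => r z + f i y z) w v ->
     sqnorm v <= M.
Hypothesis eta0 : (0 < eta)%N.
Hypothesis hp : is_proj W proj.
Hypothesis Winit : W winit.
Hypothesis q0 : forall h i y, 0 <= q h i y.
Hypothesis q1 : forall h i, \sum_(y : Y) q h i y = 1.
Hypothesis qc : forall h i,
     1 - pfail R eta (size h) <=
     \sum_(y : Y | [forall y' : Y,
          f i y' (iterw proj mu eta sg winit h) <=
          f i y (iterw proj mu eta sg winit h)]) q h i y.
Hypothesis sgh : forall h i y w, is_subgrad (fun z => r z + f i y z) w (sg h i y w).

Notation wt := (iterw proj mu eta sg winit).

Lemma W_wt h : W (wt h).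
Proof. case: h => [|c h] //=; exact: (hp _).1. Qed.

Lemma step_i h i (b : R) : 0 < b ->
  \sum_(y : Y) q h i y * sqnorm (wt ((i, y) :: h) - wstar) <=
  sqnorm (wt h - wstar) + gam mu eta (size h) ^+ 2 * M
  - 2 * gam mu eta (size h) * (gg f r i (wt h) - gg f r i wstar + mu / 2 * sqnorm (wt h - wstar)
     - (2 * b * M + sqnorm (wt h - wstar) / (2 * b)) * pfail R eta (size h)).
Proof.
move=> b0.
have Ww : W (wt h) := W_wt h.
have M0 : 0 <= M := M_ge0 hY subex Mb i Ww.
have gm0 : 0 <= gam mu eta (size h).
  by rewrite /gam divr_ge0 // ltW // mulr_gt0 // ltr0n addn_gt0 eta0 orbT.
have hqc := qc h i.
set w := wt h in Ww hqc *.
set d := sqnorm (w - wstar).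
set gm := gam mu eta (size h) in gm0 *.
set p := pfail R eta (size h) in hqc *.
have [ys hys] := fmax_exarg (fun y => f i y w) hY.
have [v' hv'] := subex i ys w.
have nv' := Mb Ww hv'.
have hv'g := subg_max hys hv'.
set A := gg f r i w - gg f r i wstar + mu / 2 * d.
have hA : forall u, is_subgrad (gg f r i) w u -> A <= dotv u (w - wstar).
  move=> u hu; have := sc_subgrad (gsc i) hu wstar.
  rewrite dist_sym dotv_sym -/d /A /gg /=; lra.
set Err := 2 * b * M + d / (2 * b).
have Err0 : 0 <= Err.
  have d0 : 0 <= d := sqnorm_ge0 _.
  have : 0 <= d / (2 * b) by rewrite divr_ge0 // mulr_ge0 // ltW.
  have : 0 <= 2 * b * M by rewrite !mulr_ge0 // ltW.
  rewrite /Err; lra.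
have hy : forall y, A - Err + (if [forall y', f i y' w <= f i y w] then Err else 0)
    <= dotv (sg h i y w) (w - wstar).
  move=> y; case: ifP => hc.
    have := hA _ (subg_max hc (sgh h i y w)); lra.
  rewrite addr0.
  have := hA _ hv'g.
  have hyg := young (v' - sg h i y w) (w - wstar) b0.
  have nv := Mb Ww (sgh h i y w).
  have hs := sqnormB_le v' (sg h i y w).
  have : b * sqnorm (v' - sg h i y w) <= b * (4 * M).
    by apply: ler_wpM2l; [exact: ltW | lra].
  have eE : Err = (b * (4 * M) + d / b) / 2 by rewrite /Err; field; rewrite gt_eqF.
  rewrite dotvBl -/d in hyg; rewrite eE; lra.
have hdd : forall y, sqnorm (wt ((i, y) :: h) - wstar) <=
    d + gm ^+ 2 * M - 2 * gm * dotv (sg h i y w) (w - wstar).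
  move=> y /=; rewrite -/w -/gm.
  apply: le_trans (proj_nonexp _ cW hp Wst) _.
  rewrite addrAC [sqnorm (_ - gm *: _)]sqnormB sqnormZ dotvZr -/d dotvC.
  have := Mb Ww (sgh h i y w) => hv.
  have : gm ^+ 2 * sqnorm (sg h i y w) <= gm ^+ 2 * M by apply: ler_wpM2l => //; exact: sqr_ge0.
  lra.
have e1 : \sum_(y : Y) q h i y * (d + gm ^+ 2 * M - 2 * gm * dotv (sg h i y w) (w - wstar))
   = (d + gm ^+ 2 * M) * \sum_(y : Y) q h i y - 2 * gm * \sum_(y : Y) q h i y * dotv (sg h i y w) (w - wstar).
  rewrite !mulr_sumr -sumrB; apply: eq_bigr => y _; ring.
have e2 : \sum_(y : Y) q h i y * (A - Err + (if [forall y', f i y' w <= f i y w] then Err else 0))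
   = (A - Err) * \sum_(y : Y) q h i y + Err * \sum_(y : Y | [forall y', f i y' w <= f i y w]) q h i y.
  rewrite !mulr_sumr [X in _ = _ + X]big_mkcond -big_split /=; apply: eq_bigr => y _.
  case: ifP => _; ring.
have h3 : \sum_(y : Y) q h i y * (A - Err + (if [forall y', f i y' w <= f i y w] then Err else 0))
   <= \sum_(y : Y) q h i y * dotv (sg h i y w) (w - wstar).
  by apply: ler_sum => y _; apply: ler_wpM2l.
have h4 : \sum_(y : Y) q h i y * sqnorm (wt ((i, y) :: h) - wstar) <=
   \sum_(y : Y) q h i y * (d + gm ^+ 2 * M - 2 * gm * dotv (sg h i y w) (w - wstar)).
  by apply: ler_sum => y _; apply: ler_wpM2l.
rewrite e1 q1 mulr1 in h4; rewrite e2 q1 mulr1 in h3.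
set Pc := \sum_(y | _) _ in h3 hqc.
set S := \sum_(y : Y) q h i y * dotv _ _ in h3 h4.
have h5 : Err * (1 - p) <= Err * Pc by apply: ler_wpM2l.
have h6 : 2 * gm * (A - Err * p) <= 2 * gm * S.
  by apply: ler_wpM2l; [rewrite mulr_ge0 | lra].
apply: le_trans h4 _; rewrite -/A -/Err; lra.
Qed.

Lemma step h :
  (n%:R)^-1 * \sum_(i < n) \sum_(y : Y) q h i y * sqnorm (wt ((i, y) :: h) - wstar) <=
  (1 - 2 * eta%:R / (size h + eta)%:R + 1 / (4 * (size h + eta)%:R)) * sqnorm (wt h - wstar)
  + 2 * eta%:R ^+ 2 * M / (mu ^+ 2 * (size h + eta)%:R ^+ 2).
Proof.
set s := (size h + eta)%:R.
have s0 : 0 < s by rewrite ltr0n addn_gt0 eta0 orbT.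
set u := Num.sqrt s.
have u0 : 0 < u by rewrite sqrtr_gt0.
have su : s = u ^+ 2 by rewrite sqr_sqrtr // ltW.
have e0 : 0 < eta%:R :> R by rewrite ltr0n.
set b := eta%:R / (mu * u).
have b0 : 0 < b by rewrite divr_gt0 // mulr_gt0.
have hs := fun i => step_i h i b0.
have Ww : W (wt h) := W_wt h.
have hF := Fmin Ww.
set d := sqnorm (wt h - wstar) in hs hF *.
set gm := gam mu eta (size h) in hs *.
set p := pfail R eta (size h) in hs *.
have gm0 : 0 <= gm.
  by rewrite /gm /gam divr_ge0 // ltW // mulr_gt0.
set Err := 2 * b * M + d / (2 * b) in hs.
have h1 : \sum_(i < n) \sum_(y : Y) q h i y * sqnorm (wt ((i, y) :: h) - wstar) <=
  \sum_(i < n) (d + gm ^+ 2 * M - 2 * gm * (gg f r i (wt h) - gg f r i wstar + mu / 2 * d - Err * p)).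
  by apply: ler_sum => i _; exact: hs i.
have e : \sum_(i < n) (d + gm ^+ 2 * M - 2 * gm * (gg f r i (wt h) - gg f r i wstar + mu / 2 * d - Err * p))
   = n%:R * (d + gm ^+ 2 * M - 2 * gm * (mu / 2 * d - Err * p))
     - 2 * gm * (\sum_(i < n) gg f r i (wt h) - \sum_(i < n) gg f r i wstar).
  rewrite (eq_bigr (fun i => (d + gm ^+ 2 * M - 2 * gm * (mu / 2 * d - Err * p))
      - 2 * gm * (gg f r i (wt h) - gg f r i wstar))); last by move=> i _; ring.
  rewrite sumrB sumr_const card_ord -mulr_natr -mulr_sumr sumrB; ring.
rewrite e in h1.
have h2 : 2 * gm * (n%:R * (mu / 2) * d) <=
   2 * gm * (\sum_(i < n) gg f r i (wt h) - \sum_(i < n) gg f r i wstar).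
  by apply: ler_wpM2l => //; rewrite mulr_ge0.
have n0' : 0 < n%:R :> R by rewrite ltr0n.
have h3 : (n%:R)^-1 * \sum_(i < n) \sum_(y : Y) q h i y * sqnorm (wt ((i, y) :: h) - wstar)
   <= (n%:R)^-1 * (n%:R * (d + gm ^+ 2 * M - 2 * gm * (mu * d - Err * p)))
  by apply: ler_wpM2l; [rewrite invr_ge0 ltW | lra].
apply: le_trans h3 _.
rewrite mulKf ?gt_eqF //.
rewrite /Err /b /gm /p /gam /pfail -/s -/u su.
rewrite le_eqVlt; apply/orP; left; apply/eqP.
field; rewrite ?mulf_neq0 ?gt_eqF // ?mulr_gt0 // ?ltr0n // ?divr_gt0 //.
Qed.

End Step2.


Lemma final_alg (R : realType) (e s C k a : R) : 1 <= e -> e <= s -> 0 <= C -> 0 <= a ->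
  a <= 4 * C / s -> k = 1 - 2 * e / s + 1 / (4 * s) ->
  k * a + 2 * C / s ^+ 2 <= 4 * C / (s + 1).
Proof.
move=> e1 es C0 a0 ha hk.
have s0 : 0 < s by lra.
have s1 : 0 < s + 1 by lra.
case: (lerP 0 k) => k0.
  have h1 : k * a <= k * (4 * C / s) by apply: ler_wpM2l.
  apply: le_trans (lerD h1 (lexx _)) _.
  rewrite -subr_ge0.
  have -> : 4 * C / (s + 1) - (k * (4 * C / s) + 2 * C / s ^+ 2) =
     C * (8 * e * s + 8 * e - 7 * s - 3) / (s ^+ 2 * (s + 1)).
    by rewrite hk; field; rewrite ?gt_eqF.
  apply: divr_ge0; last by rewrite ltW // mulr_gt0 // exprn_gt0.
  apply: mulr_ge0 => //.
  have : 0 <= (e - 1) * s by rewrite mulr_ge0 // ?subr_ge0 // ltW.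
  lra.
have h1 : k * a <= 0 by rewrite nmulr_rle0.
apply: le_trans (lerD h1 (lexx _)) _; rewrite add0r.
rewrite -subr_ge0.
have -> : 4 * C / (s + 1) - 2 * C / s ^+ 2 =
   C * (4 * s * s - 2 * s - 2) / (s ^+ 2 * (s + 1)) by field; rewrite ?gt_eqF.
apply: divr_ge0; last by rewrite ltW // mulr_gt0 // exprn_gt0.
apply: mulr_ge0 => //.
have : 0 <= (s - 1) * s by apply: mulr_ge0; lra.
lra.
Qed.

Lemma sum_pair (R : realType) (I J : finType) (G : I * J -> R) :
  \sum_(c : I * J) G c = \sum_(i : I) \sum_(j : J) G (i, j).
Proof. by rewrite pair_bigA; apply: eq_bigr => -[i j]. Qed.

Unset Implicit Arguments. Set Strict Implicit.

Theorem mainTheorem13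
  (R : realType) (D n : nat) (Y : finType)
  (W : 'rV[R]_D -> Prop) (f : 'I_n -> Y -> 'rV[R]_D -> R) (r : 'rV[R]_D -> R)
  (mu M : R) (w0 wstar winit : 'rV[R]_D) (eta : nat)
  (proj : 'rV[R]_D -> 'rV[R]_D)
  (q : seq ('I_n * Y) -> 'I_n -> Y -> R)
  (sg : seq ('I_n * Y) -> 'I_n -> Y -> 'rV[R]_D -> 'rV[R]_D) :
  (0 < n)%N -> (0 < #|Y|)%N ->
  convex_set W ->
  (forall i y, convex_fun (f i y)) ->
  (exists sigma : R, 0 < sigma /\ strongly_convex sigma r) ->
  0 < mu ->
  (forall i, strongly_convex mu (fun w => r w + fmax (fun y => f i y w))) ->
  (forall i y w, exists v, is_subgrad (fun z => r z + f i y z) w v) ->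
  (forall i y w v, W w -> is_subgrad (fun z => r z + f i y z) w v ->
     sqnorm v <= M) ->
  W w0 -> (forall i, r w0 + fmax (fun y => f i y w0) = 0) ->
  (* wstar = argmin over W of f = (1/n) sum_i g_i *)
  W wstar ->
  (forall w, W w ->
     (n%:R)^-1 * \sum_(i < n) (r wstar + fmax (fun y => f i y wstar))
     <= (n%:R)^-1 * \sum_(i < n) (r w + fmax (fun y => f i y w))) ->
  (0 < eta)%N ->
  is_proj W proj ->
  W winit ->
  (* the maximizer estimator: a distribution on Y (depending on the whole past)
     putting mass >= 1 - p_t on the maximizers of f_i(., w^t) *)
  (forall h i y, 0 <= q h i y) ->
  (forall h i, \sum_(y : Y) q h i y = 1) ->
  (forall h i,
     1 - pfail R eta (size h) <=
     \sum_(y : Y | [forall y' : Y,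
          f i y' (iterw proj mu eta sg winit h) <=
          f i y (iterw proj mu eta sg winit h)]) q h i y) ->
  (* subgradients used by the algorithm *)
  (forall h i y w, is_subgrad (fun z => r z + f i y z) w (sg h i y w)) ->
  forall t : nat,
    \sum_(h : t.-tuple ('I_n * Y))
       histprob q h * sqnorm (iterw proj mu eta sg winit h - wstar)
    <= 4 * (eta%:R) ^+ 2 * M / (mu ^+ 2 * (t + eta)%:R).
Proof.
move=> n0 hY cW _ _ mu0 gsc subex Mb _ _ Wst hmin eta0 hp Winit q0 q1 qc sgh.
have stp := step n0 cW mu0 gsc hmin Wst hY subex Mb eta0 hp Winit q0 q1 qc sgh.
have hp0 : forall h, 0 <= histprob q h.
  by elim => //= c s IH; rewrite !mulr_ge0 // invr_ge0 ler0n.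
have hsum : forall h, \sum_(c : 'I_n * Y) q h c.1 c.2 = n%:R.
  move=> h; rewrite sum_pair /=.
  rewrite (eq_bigr (fun _ => 1)); last by move=> i _; exact: q1.
  by rewrite sumr_const card_ord.
have hp1 : forall t, \sum_(h : t.-tuple ('I_n * Y)) histprob q h = 1.
  elim => [|t0 IH0]; first by rewrite sum_tuple0.
  rewrite (sum_tupleS _ (fun s => histprob q s)) exchange_big /=.
  rewrite -[RHS]IH0; apply: eq_bigr => h _.
  rewrite (eq_bigr (fun c => histprob q h * (n%:R^-1 * q h c.1 c.2))); last first.
    by move=> c _; rewrite mulrA.
  by rewrite -mulr_sumr -mulr_sumr hsum mulVf ?mulr1 // pnatr_eq0 -lt0n.
have M0 : 0 <= M := M_ge0 hY subex Mb (Ordinal n0) Winit.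
have e1 : (1 <= eta%:R :> R) by rewrite ler1n.
have C0 : 0 <= eta%:R ^+ 2 * M / mu ^+ 2.
  by rewrite divr_ge0 ?mulr_ge0 ?exprn_ge0 // ltW.
elim => [|t IH].
  rewrite (sum_tuple0 (fun s => histprob q s * sqnorm (iterw proj mu eta sg winit s - wstar))) /= mul1r.
  apply: le_trans (apriori hY subex Mb mu0 gsc (Ordinal n0) Winit Wst) _.
  have -> : 4 * eta%:R ^+ 2 * M / (mu ^+ 2 * (0 + eta)%:R) = 4 * M / mu ^+ 2 * eta%:R.
    by rewrite add0n; field; rewrite ?gt_eqF // ?ltr0n // exprn_gt0.
  have X0 : 0 <= 4 * M / mu ^+ 2 by rewrite divr_ge0 ?mulr_ge0 ?exprn_ge0 // ltW.
  by have := ler_wpM2l X0 e1; rewrite mulr1.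
rewrite (sum_tupleS _ (fun s => histprob q s * sqnorm (iterw proj mu eta sg winit s - wstar))) exchange_big.
pose s := (t + eta)%:R :> R.
pose k := (1 - 2 * eta%:R / s + 1 / (4 * s)).
pose K2 := 2 * eta%:R ^+ 2 * M / (mu ^+ 2 * s ^+ 2).
set C := eta%:R ^+ 2 * M / mu ^+ 2 in C0.
have h1 : forall h : t.-tuple ('I_n * Y),
    \sum_c histprob q (c :: h) * sqnorm (iterw proj mu eta sg winit (c :: h) - wstar)
    <= histprob q h * (k * sqnorm (iterw proj mu eta sg winit h - wstar) + K2).
  move=> h.
  rewrite (eq_bigr (fun c => histprob q h * (n%:R^-1 *
     (q h c.1 c.2 * sqnorm (iterw proj mu eta sg winit (c :: h) - wstar))))); last first.
    by move=> c _; rewrite [histprob _ (_ :: _)]/= !mulrA.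
  rewrite -mulr_sumr; apply: ler_wpM2l => //.
  rewrite -mulr_sumr sum_pair.
  have := stp h; rewrite size_tuple; exact.
have h2 : \sum_(h : t.-tuple ('I_n * Y)) \sum_c histprob q (c :: h) * sqnorm (iterw proj mu eta sg winit (c :: h) - wstar)
    <= \sum_(h : t.-tuple ('I_n * Y)) histprob q h * (k * sqnorm (iterw proj mu eta sg winit h - wstar) + K2).
  by apply: ler_sum => h _; exact: h1 h.
apply: le_trans h2 _.
rewrite (eq_bigr (fun h : t.-tuple ('I_n * Y) => k * (histprob q h * sqnorm (iterw proj mu eta sg winit h - wstar))
   + K2 * histprob q h)); last by move=> h _; rewrite /=; ring.
rewrite big_split /= -!mulr_sumr hp1 mulr1.
have s0 : 0 < s by rewrite ltr0n addn_gt0 eta0 orbT.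
have -> : K2 = 2 * C / s ^+ 2.
  by rewrite /K2 /C; field; rewrite -natrD -/s !gt_eqF.
have -> : 4 * eta%:R ^+ 2 * M / (mu ^+ 2 * (t.+1 + eta)%:R) = 4 * C / (s + 1).
  rewrite addSn -addn1 natrD -/s /C; field; rewrite ?gt_eqF // ?exprn_gt0 //.
  by rewrite -natrD; have : 0 <= (t + eta)%:R :> R := ler0n _ _; lra.
have IH' : \sum_(h : t.-tuple ('I_n * Y)) histprob q h * sqnorm (iterw proj mu eta sg winit h - wstar)
   <= 4 * C / s.
  apply: le_trans IH _; rewrite /C le_eqVlt; apply/orP; left; apply/eqP.
  rewrite -/s; field; rewrite -natrD -/s !gt_eqF //.
apply: (@final_alg _ eta%:R) IH' _ => //.
- by rewrite /s ler_nat leq_addl.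
- by apply: sumr_ge0 => h _; rewrite mulr_ge0 // sqnorm_ge0.
Qed.
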